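(* Let $X$ be a finite cycle set and let $G(X)$ be its permutation group. Then the action of $G(X)$ on $X$ is not a Frobenius action; that is, $G(X)$ does not act on $X$ as a Frobenius group.
   Context: A cycle set is a set $X$ with a binary operation $\cdot$ such that for every $x\in X$ the map $\sigma(x)\colon X\to X$, $y\mapsto x\cdot y$, is bijective, and $(x\cdot y)\cdot(x\cdot z)=(y\cdot x)\cdot(y\cdot z)$ for all $x,y,z\in X$. The permutation group $G(X)$ is the subgroup of the symmetric group on $X$ generated by all $\sigma(x)$, $x\in X$. A group $G$ acting on a finite set $X$ acts as a Frobenius group if the action is transitive, every element $g\ne 1$ of $G$ fixes at most one point of $X$, and some element $g\neq 1$ fixes a point of $X$. *)

(* Defs.v *)
From mathcomp Require Import all_boot all_fingroup.
Set Implicit Arguments. Unset Strict Implicit. Unset Printing Implicit Defensive.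
Local Open Scope group_scope.

Definition is_cycle_set (X : finType) (op : X -> X -> X) : Prop :=
  (forall x, bijective (op x)) /\
  (forall x y z, op (op x y) (op x z) = op (op y x) (op y z)).

Definition sigma_perm (X : finType) (op : X -> X -> X)
  (inj : forall x, injective (op x)) (x : X) : {perm X} := perm (inj x).

Definition perm_group_cs (X : finType) (op : X -> X -> X)
  (inj : forall x, injective (op x)) : {group {perm X}} :=
  <<[set sigma_perm inj x | x : X]>>%G.

Definition frobenius_action (X : finType) (G : {set {perm X}}) : Prop :=
  [/\ forall x y : X, exists2 g, g \in G & g x = y,
      forall g, g \in G -> g != 1 -> forall x y : X, g x = x -> g y = y -> x = y
    & exists2 g, g \in G & g != 1 /\ exists x : X, g x = x].

(* Main.v *)
From HB Require Import structures.
Require Import Defs.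
From mathcomp Require Import all_boot all_fingroup all_solvable.
From Stdlib Require Import ClassicalEpsilon.
Set Implicit Arguments. Unset Strict Implicit. Unset Printing Implicit Defensive.
Local Open Scope group_scope.

Section Brace.
Variables (X : finType) (op : X -> X -> X) (inj : forall x, injective (op x)).
Hypothesis Hcs : forall x y z, op (op x y) (op x z) = op (op y x) (op y z).

Let G := perm_group_cs inj.
Definition sg (x : X) : {perm X} := sigma_perm inj x.

Lemma sgE x y : sg x y = op x y.
Proof. by rewrite /sg /sigma_perm permE. Qed.

Lemma sg_in x : sg x \in G.
Proof. by rewrite mem_gen // imset_f. Qed.

Definition F (acc : {perm X}) (y : X) := acc * sg (acc y).
Lemma FE acc y : F acc y = acc * sg (acc y). Proof. by []. Qed.
Definition T (s : seq X) := foldl F 1 s.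

Lemma foldl_mul g t : foldl F g t = g * T (map g t).
Proof.
move: {2}(size t) (leqnn (size t)) => n; elim: n t g => [|n IH] [|y t] g //=;
  rewrite ?mulg1 // ltnS => Ht.
rewrite IH // /T /= [in RHS]IH ?size_map // -/(T _) !FE perm1 mul1g mulgA -map_comp.
by congr (_ * T _); apply: eq_map => z /=; rewrite permM.
Qed.

Lemma T_cat s t : T (s ++ t) = T s * T (map (T s) t).
Proof. by rewrite /T foldl_cat foldl_mul. Qed.

Lemma T1 y : T [:: y] = sg y.
Proof. by rewrite /T /= /F perm1 mul1g. Qed.

Lemma T0 : T [::] = 1.
Proof. by []. Qed.

Lemma T_cons y t : T (y :: t) = sg y * T (map (sg y) t).
Proof. by rewrite -cat1s T_cat T1. Qed.

Lemma T_rcons s y : T (rcons s y) = T s * sg (T s y).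
Proof. by rewrite -cats1 T_cat T1. Qed.

Lemma key a b : sg a * sg (sg a b) = sg b * sg (sg b a).
Proof. by apply/permP => z; rewrite !permM !sgE Hcs. Qed.

Lemma T_swap0 a b u : T [:: a, b & u] = T [:: b, a & u].
Proof.
have E : T [:: a; b] = T [:: b; a].
  by rewrite -[[:: a; b]]/(rcons [:: a] b) -[[:: b; a]]/(rcons [:: b] a) !T_rcons !T1 key.
by rewrite -[_ :: _ :: u]/([:: a; b] ++ u) -[[:: b, a & u]]/([:: b; a] ++ u) !T_cat E.
Qed.

Lemma T_swap p a b u : T (p ++ [:: a, b & u]) = T (p ++ [:: b, a & u]).
Proof. by rewrite !T_cat /= T_swap0. Qed.

Lemma T_move p t y u : T (p ++ t ++ y :: u) = T (p ++ y :: t ++ u).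
Proof.
elim: t p => [|a t IH] p //=.
by rewrite -cat_rcons IH cat_rcons T_swap.
Qed.

Lemma T_catC s t : T (s ++ t) = T (t ++ s).
Proof.
elim: s t => [|a s IH] t /=; first by rewrite cats0.
have := T_move [::] (s ++ t) a [::]; rewrite /= cats0 => <-.
by rewrite -catA IH -catA.
Qed.

Lemma T_in s : T s \in G.
Proof.
rewrite /T; have : (1 : {perm X}) \in G by rewrite group1.
elim: s 1 => [|y s IH] g Hg //=; apply: IH; rewrite FE groupM //; exact: sg_in.
Qed.

Lemma T_surj g : g \in G -> exists s, T s = g.
Proof.
move=> /gen_prodgP [n [c Hc ->]]; elim: n c Hc => [|n IH] c Hc.
  by exists [::]; rewrite big_ord0.
rewrite big_ord_recr /=; have [s Hs] := IH (fun i => c (widen_ord (leqnSn n) i)) (fun i => Hc _).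
have /imsetP [z _ ->] := Hc ord_max.
by exists (rcons s ((T s)^-1 z)); rewrite T_rcons permKV Hs.
Qed.

Lemma T_map_sg z t : T (map (sg z) t) = (sg z)^-1 * (T t * sg (T t z)).
Proof.
by rewrite -T_rcons -cats1 -T_catC /= T_cons mulKg.
Qed.

Lemma T_wd g t t' : g \in G -> T t = T t' -> T (map g t) = T (map g t').
Proof.
move=> /gen_prodgP [n [c Hc ->]]; elim: n c Hc t t' => [|n IH] c Hc t t' E.
  by rewrite big_ord0 !(eq_map (@perm1 X)) !map_id.
rewrite big_ord_recr /=.
have /imsetP [z _ Ez] := Hc ord_max.
have M h s : map (h * c ord_max) s = map (c ord_max) (map h s).
  by rewrite -map_comp; apply: eq_map => w /=; rewrite permM.
rewrite !M Ez !T_map_sg (IH (fun i => c (widen_ord (leqnSn n) i)) (fun i => Hc _) t t') //.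
Qed.

Definition rep (g : {perm X}) : seq X := epsilon (inhabits [::]) (fun s => T s = g).
Lemma repE g : g \in G -> T (rep g) = g.
Proof. by move=> /T_surj H; apply: (epsilon_spec (inhabits [::]) (fun s => T s = g)). Qed.

Definition lam (g h : {perm X}) := T (map g (rep h)).
Lemma lamT g t : g \in G -> lam g (T t) = T (map g t).
Proof. by move=> Hg; apply: T_wd => //; rewrite repE // T_in. Qed.
Lemma lam_in g h : lam g h \in G. Proof. exact: T_in. Qed.

Definition add g h := g * lam g h.
Lemma addT s t : add (T s) (T t) = T (s ++ t).
Proof. by rewrite /add lamT ?T_in // T_cat. Qed.
Definition neg (g : {perm X}) := lam g^-1 g^-1.

Lemma lamM g g' t : g \in G -> g' \in G -> lam (g * g') (T t) = lam g' (lam g (T t)).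
Proof.
move=> Hg Hg'; rewrite !lamT ?groupM // -map_comp; congr T; apply: eq_map => z /=.
by rewrite permM.
Qed.

Lemma TE g : g \in G -> {t | T t = g}.
Proof. by move=> Hg; exists (rep g); rewrite repE. Qed.

Lemma add_in g h : g \in G -> add g h \in G.
Proof. by move=> Hg; rewrite /add groupM ?lam_in. Qed.

Lemma addA g h k : g \in G -> h \in G -> k \in G -> add (add g h) k = add g (add h k).
Proof.
case/TE=> s <-; case/TE=> t <-; case/TE=> u <-.
by rewrite !addT catA.
Qed.

Lemma addC g h : g \in G -> h \in G -> add g h = add h g.
Proof. by case/TE=> s <-; case/TE=> t <-; rewrite !addT T_catC. Qed.

Lemma add1 g : g \in G -> add 1 g = g.
Proof. by case/TE=> s <-; rewrite -T0 addT. Qed.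

Lemma neg_in g : neg g \in G. Proof. exact: lam_in. Qed.

Lemma addN g : g \in G -> add g (neg g) = 1.
Proof.
move=> Hg; have Hi : g^-1 \in G by rewrite groupV.
case: (TE Hi) => w Ew; have -> : neg g = T (map g^-1 w) by rewrite /neg -{2}Ew lamT.
rewrite /add lamT //.
rewrite -map_comp (@eq_map _ _ _ id); last by move=> z /=; rewrite permKV.
by rewrite map_id Ew mulgV.
Qed.

Lemma Nadd g : g \in G -> add (neg g) g = 1.
Proof. by move=> Hg; rewrite addC ?neg_in // addN. Qed.

Definition AT := {g : {perm X} | g \in G}.
Definition mulA (a b : AT) : AT := exist _ (add (val a) (val b)) (add_in _ (valP a)).
Definition oneA : AT := exist _ 1 (group1 G).
Definition invA (a : AT) : AT := exist _ (neg (val a)) (neg_in _).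

Lemma mulAA : associative mulA.
Proof. by move=> a b c; apply: val_inj; rewrite /= addA ?(valP a) ?(valP b) ?(valP c). Qed.
Lemma mul1A : left_id oneA mulA.
Proof. by move=> a; apply: val_inj; rewrite /= add1 ?(valP a). Qed.
Lemma mulVA : left_inverse oneA invA mulA.
Proof. by move=> a; apply: val_inj; rewrite /= Nadd ?(valP a). Qed.

HB.instance Definition _ := Finite.on AT.
HB.instance Definition _ := Finite_isGroup.Build AT mulAA mul1A mulVA.

Lemma AT_abelian : abelian [set: AT].
Proof.
apply/centsP => a _ b _; apply: val_inj; rewrite /= addC ?(valP a) ?(valP b) //.
Qed.

Definition sgA x : AT := exist _ (sg x) (sg_in x).
Definition lamA (g : {perm X}) (a : AT) : AT := exist _ (lam g (val a)) (lam_in _ _).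

Lemma val_mulA (a b : AT) : val (a * b) = val a * val (lamA (val a) b).
Proof. by []. Qed.

Lemma val_oneA : val (1 : AT) = 1.
Proof. by []. Qed.

Lemma lamAM g a b : g \in G -> lamA g (a * b) = lamA g a * lamA g b.
Proof.
move=> Hg; apply: val_inj => /=.
case: (TE (valP a)) => s Es; case: (TE (valP b)) => t Et.
by rewrite -Es -Et addT !lamT ?T_in // map_cat addT.
Qed.

Lemma lamA1 g : g \in G -> lamA g 1 = 1.
Proof. by move=> Hg; apply: val_inj => /=; rewrite -T0 lamT. Qed.

Lemma lamA_comp g g' a : g \in G -> g' \in G -> lamA (g * g') a = lamA g' (lamA g a).
Proof.
move=> Hg Hg'; apply: val_inj => /=; case: (TE (valP a)) => s <-.
by rewrite lamM // lamT.
Qed.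

Lemma lamA_id a : lamA 1 a = a.
Proof.
apply: val_inj => /=; case: (TE (valP a)) => s <-.
by rewrite lamT ?group1 // (eq_map (@perm1 X)) map_id.
Qed.

Lemma lamAK g : g \in G -> cancel (lamA g) (lamA g^-1).
Proof. by move=> Hg a; rewrite -lamA_comp ?groupV // mulgV lamA_id. Qed.

Lemma lamA_inj g : g \in G -> injective (lamA g).
Proof. by move=> Hg; apply: can_inj (lamAK Hg). Qed.

Lemma lamA_sg g x : g \in G -> lamA g (sgA x) = sgA (g x).
Proof. by move=> Hg; apply: val_inj => /=; rewrite -!T1 lamT. Qed.

Lemma lamAX g a n : g \in G -> lamA g (a ^+ n) = (lamA g a) ^+ n.
Proof.
move=> Hg; elim: n => [|n IH]; first by rewrite !expg0 lamA1.
by rewrite !expgS lamAM // IH.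
Qed.

Lemma lamA_order g a : g \in G -> #[lamA g a] = #[a].
Proof.
move=> Hg; apply/eqP; rewrite eqn_dvd; apply/andP; split.
  by rewrite order_dvdn -lamAX // expg_order lamA1.
rewrite order_dvdn; apply/eqP; apply: (lamA_inj Hg).
by rewrite lamAX // expg_order lamA1.
Qed.

Lemma lamA_constt g a pi : g \in G -> (lamA g a).`_pi = lamA g a.`_pi.
Proof. by move=> Hg; rewrite /constt lamA_order // lamAX. Qed.

Lemma lamA_pelt g a pi : g \in G -> pi.-elt (lamA g a) = pi.-elt a.
Proof. by move=> Hg; rewrite /p_elt lamA_order. Qed.

Section Main.
Hypothesis fp : forall g, g \in G -> g != 1 -> forall x y : X, g x = x -> g y = y -> x = y.

Lemma noFix r (A : {group {perm X}}) x : prime r -> r %| #|X| -> r.-group A ->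
  A \subset G -> A :!=: 1 -> (forall a, a \in A -> a x = x) -> False.
Proof.
move=> pr rn rA AG ntA Ax.
have acts : [acts A, on [set: X] | 'P].
  by apply/subsetP => a _; rewrite !inE; apply/subsetP => z _; rewrite !inE.
have := pgroup_fix_mod rA acts; rewrite cardsT.
have -> : 'Fix_([set: X] | 'P)(A) = [set x].
  apply/setP => z; rewrite !inE /=; apply/subsetP/eqP => [Hz|-> a Aa].
    have [a Aa na1] := trivgPn _ ntA.
    have := Hz a Aa; rewrite inE /aperm => /eqP.
    by move=> Hza; exact: (fp (subsetP AG a Aa) na1 Hza (Ax a Aa)).
  by rewrite inE /aperm Ax.
rewrite cards1 => H.
have : r %| 1 by rewrite /dvdn -H; exact: rn.
by rewrite dvdn1 => /eqP r1; rewrite r1 in pr.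
Qed.

Lemma memO pi (a : AT) : (a \in 'O_pi([set: AT])) = pi.-elt a.
Proof.
have hall := nilpotent_pcore_Hall pi (abelian_nil AT_abelian).
by rewrite (mem_normal_Hall hall (pcore_normal _ _)) ?inE.
Qed.

Lemma O_inv pi g a : g \in G -> a \in 'O_pi([set: AT]) -> lamA g a \in 'O_pi([set: AT]).
Proof. by move=> Hg; rewrite !memO lamA_pelt. Qed.

Definition vA (a : AT) : {perm X} := val a.
Lemma vA_inj : injective vA. Proof. exact: val_inj. Qed.
Lemma vA_in a : vA a \in G. Proof. exact: valP. Qed.

Lemma img_gs pi : group_set (vA @: 'O_pi([set: AT])).
Proof.
apply/group_setP; split; first by apply/imsetP; exists (1 : AT); rewrite ?group1.
move=> _ _ /imsetP [a Ha ->] /imsetP [b Hb ->].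
have Ha' : vA a \in G := vA_in a.
apply/imsetP; exists (a * lamA (vA a)^-1 b); first by rewrite groupM // O_inv ?groupV.
by rewrite /vA val_mulA -lamA_comp ?groupV // mulVg lamA_id.
Qed.

Definition imgG pi := Group (img_gs pi).

Lemma card_imgG pi : #|imgG pi| = #|'O_pi([set: AT])|.
Proof. by rewrite /= card_imset //; exact: vA_inj. Qed.

Lemma imgG_pgroup pi : pi.-group (imgG pi).
Proof. by rewrite /pgroup card_imgG; exact: pcore_pgroup. Qed.

Lemma imgG_sub pi : imgG pi \subset G.
Proof. by apply/subsetP => _ /imsetP [a _ ->]; exact: valP. Qed.

Lemma mem_imgG pi (a : AT) : (vA a \in imgG pi) = pi.-elt a.
Proof. by rewrite /= mem_imset ?memO //; exact: vA_inj. Qed.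

Lemma main_false
  (tr : forall x y : X, exists2 g, g \in G & g x = y)
  (ex : exists2 g, g \in G & g != 1 /\ exists x : X, g x = x) : False.
Proof.
case: ex => g0 Gg0 [ng0 [x0 g0x0]].
set H := 'C_G[x0 | 'P].
have g0H : g0 \in H by rewrite inE Gg0 /=; apply/astab1P.
have H1 : 1 < #|H|.
  by apply/card_gt1P; exists 1, g0; rewrite group1 g0H eq_sym ng0.
set p := pdiv #|H|.
have pp : prime p := pdiv_prime H1.
have pH : p %| #|H| := pdiv_dvd _.
have Hfix u : u \in H -> u x0 = x0 by case/setIP => _ /astab1P.
have HG : H \subset G := subsetIl _ _.
have pn : ~~ (p %| #|X|).
  apply/negP => pn; have [u Hu ou] := Cauchy pp pH.
  apply: (@noFix p <[u]>%G x0) => //.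
  - by rewrite /pgroup -orderE ou pnat_id.
  - by rewrite cycle_subG (subsetP HG).
  - by rewrite cycle_eq1 -order_gt1 ou prime_gt1.
  - by move=> a /cycleP [k ->]; rewrite Hfix // groupX.
have n1 : 1 < #|X|.
  case: (pickP (fun z => g0 z != z)) => [z Hz|H0].
    by apply/card_gt1P; exists z, (g0 z); rewrite eq_sym Hz.
  case/negP: ng0; apply/eqP/permP => z; rewrite perm1; apply/eqP.
  by move: (H0 z) => /= /negbFE.
set q := pdiv #|X|.
have qp : prime q := pdiv_prime n1.
have qn : q %| #|X| := pdiv_dvd _.
have cardA : #|[set: AT]| = #|G| by rewrite cardsT card_sig.
have semiQ (w : AT) x : q.-elt w -> vA w x = x -> w = 1.
  move=> qw wx; apply: vA_inj; apply/eqP; apply/negPn/negP => nw.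
  apply: (@noFix q <[vA w]>%G x) => //.
  - have : q.-elt (vA w) by apply: mem_p_elt (imgG_pgroup q) _; rewrite mem_imgG.
    by [].
  - by rewrite cycle_subG vA_in.
  - by rewrite cycle_eq1.
  - move=> a /cycleP [k ->]; elim: k => [|k IH]; first by rewrite expg0 perm1.
    by rewrite expgSr permM IH wx.
have [x1 Hx1] : exists x1, forall a, a \in imgG p -> a x1 = x1.
  have acts : [acts imgG p, on [set: X] | 'P].
    by apply/subsetP => a _; rewrite !inE; apply/subsetP => z _; rewrite !inE.
  have := pgroup_fix_mod (imgG_pgroup p) acts; rewrite cardsT.
  case: (set_0Vmem ('Fix_([set: X] | 'P)(imgG p))) => [-> | [x1 Hx1]].
    by rewrite cards0 => E; case/negP: pn; rewrite /dvdn E mod0n.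
  by move=> _; exists x1 => a Ha; move: Hx1; rewrite inE => /andP [_ /afixP /(_ a Ha)].
have [a0 _ oa0] : {a | a \in [set: AT] & #[a] = p}.
  by apply: Cauchy pp _; rewrite cardA; exact: dvdn_trans pH (cardSg HG).
have pa0 : p.-elt a0 by rewrite /p_elt oa0 pnat_id.
have na0 : a0 != 1 by rewrite -order_gt1 oa0 prime_gt1.
have a0x1 : vA a0 x1 = x1 by apply: Hx1; rewrite mem_imgG.
set w := (sgA x1).`_q.
have lw : lamA (vA a0) w = w by rewrite /w -lamA_constt ?vA_in // lamA_sg ?vA_in // a0x1.
have w1 : w = 1.
  apply: (semiQ w x1); first exact: p_elt_constt.
  have comm : a0 * w = w * a0 by apply: (centsP AT_abelian); rewrite inE.
  have E : vA (a0 * w) x1 = vA (w * a0) x1 by rewrite comm.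
  rewrite /vA !val_mulA !permM -/(vA a0) a0x1 -/(vA w) lw in E.
  set b := lamA (vA w) a0 in E.
  have bP : p.-elt b by rewrite lamA_pelt ?vA_in.
  have nb : vA b != 1.
    apply/negP => /eqP b1; case/negP: na0; apply/eqP; apply: (lamA_inj (vA_in w)).
    by rewrite lamA1 ?vA_in //; apply: vA_inj; rewrite b1.
  have bx1 : vA b x1 = x1 by apply: Hx1; rewrite mem_imgG.
  by apply/esym; apply: (fp (vA_in b) nb bx1); exact: (esym E).
have sgq y : sg y \in imgG q^'.
  have [g Gg gy] := tr x1 y.
  have -> : sg y = vA (sgA y) by [].
  rewrite mem_imgG; apply/constt1P.
  by rewrite -gy -lamA_sg // lamA_constt // -/w w1 lamA1.
have GQ : G \subset imgG q^'.
  rewrite /G /perm_group_cs; change (<<[set sigma_perm inj x | x in X]>> \subset imgG q^'); rewrite gen_subG.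
  apply/subsetP => _ /imsetP [y _ ->]; exact: sgq.
have qG : q %| #|G|.
  rewrite -(card_orbit_stab 'P G x1); apply: dvdn_mulr.
  have -> : orbit 'P G x1 = [set: X].
    apply/setP => y; rewrite inE; have [g Gg <-] := tr x1 y.
    by apply/orbitP; exists g.
  by rewrite cardsT.
have [c _ oc] : {c | c \in [set: AT] & #[c] = q} by apply: Cauchy qp _; rewrite cardA.
have : q^'.-elt c by rewrite -mem_imgG (subsetP GQ) ?vA_in.
by rewrite /p_elt oc pnatE // !inE eqxx.
Qed.

End Main.
End Brace.

Theorem theorem1 (X : finType) (op : X -> X -> X)
  (inj : forall x, injective (op x)) :
  is_cycle_set op -> ~ frobenius_action (perm_group_cs inj).
Proof.
move=> [_ Hcs] [tr fp ex].
exact: (main_false Hcs fp tr ex).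
Qed.
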